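(* Let $G=\langle a\rangle\times\langle b\rangle\cong\mathbb{Z}\times\mathbb{Z}$ and let $\mathcal{A}$ be a Schur ring over $G$. If $\langle a^k\rangle$ is an $\mathcal{A}$-subgroup for some nonzero integer $k$, then $\langle a\rangle$ is an $\mathcal{A}$-subgroup.
   Context: $\mathbb{F}$ is a field of characteristic $0$. A Schur ring over a group $G$ is a subspace $\mathcal{A}\subseteq\mathbb{F}[G]$ spanned by the elements $\underline{D}=\sum_{g\in D}g$, $D\in\mathcal{D}$, where $\mathcal{D}$ is a partition of $G$ into finite subsets such that $\{1\}\in\mathcal{D}$, $D\in\mathcal{D}\Rightarrow D^{-1}\in\mathcal{D}$, and each product $\underline{D_1}\,\underline{D_2}$ is a finite $\mathbb{F}$-linear combination of the $\underline{D}$, $D\in\mathcal{D}$. The elements of $\mathcal{D}$ are basic sets; an $\mathcal{A}$-subgroup is a subgroup which is a union of basic sets. *)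

(* Defs.v *)
From HB Require Import structures.
From mathcomp Require Import all_boot all_order all_algebra.
Set Implicit Arguments. Unset Strict Implicit. Unset Printing Implicit Defensive.
Import Order.TTheory GRing.Theory Num.Theory.
Local Open Scope ring_scope.

(* The group G = <a> x <b> = Z x Z, written additively as int * int,
   with a = (1,0) and b = (0,1).  Subsets of G are boolean predicates. *)
Definition G : zmodType := (int * int)%type.
Definition gen_a : G := (1%:Z, 0%:Z).
Definition gen_b : G := (0%:Z, 1%:Z).

Definition cyc (x : G) : G -> Prop := fun g => exists n : int, g = x *~ n.

Definition gfinite (D : pred G) : Prop := exists s : seq G, uniq s /\ D =i s.

Definition is_partition (P : pred G -> Prop) : Prop :=
  [/\ (forall D, P D -> exists x, D x),
      (forall x, exists D, P D /\ D x) &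
      (forall D1 D2 x, P D1 -> P D2 -> D1 x -> D2 x -> D1 =1 D2)].

(* coefficient at g of the product underline(D1) * underline(D2) in F[G],
   where D1, D2 are enumerated without repetition by s1, s2 *)
Definition prod_coef (F : fieldType) (s1 s2 : seq G) (g : G) : F :=
  (\sum_(x <- s1) \sum_(y <- s2) ((x + y == g) : nat)%:R).

Definition schur_ring (F : fieldType) (P : pred G -> Prop) : Prop :=
  [/\ is_partition P,
      (forall D, P D -> gfinite D),
      (exists D, P D /\ D =1 pred1 0),
      (forall D, P D -> exists D', P D' /\ forall x, D' x = D (- x)) &
      (forall D1 D2 (s1 s2 : seq G), P D1 -> P D2 ->
         uniq s1 -> uniq s2 -> D1 =i s1 -> D2 =i s2 ->
         exists (n : nat) (c : 'I_n -> F) (E : 'I_n -> pred G),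
           (forall i, P (E i)) /\
           forall g, prod_coef F s1 s2 g = \sum_(i < n) c i * ((E i g : bool) : nat)%:R)].

Definition is_subgroup (H : G -> Prop) : Prop :=
  H 0 /\ (forall x y, H x -> H y -> H (x - y)).

Definition A_subgroup (P : pred G -> Prop) (H : G -> Prop) : Prop :=
  is_subgroup H /\
  forall x, H x -> exists D, P D /\ D x /\ (forall y, D y -> H y).

(* Main.v *)
Require Import Defs.
From HB Require Import structures.
From mathcomp Require Import all_boot all_order all_algebra all_fingroup all_solvable.
From mathcomp Require Import ring.
Import GRing.Theory Num.Theory.
Local Open Scope ring_scope.

Fixpoint cnt (s : seq G) (j : nat) (g : G) : nat :=
  if j is j'.+1 then (\sum_(y <- s) cnt s j' (g - y))%N else (g == 0 : nat).

Lemma bump0' i : bump 0 i = i.+1. Proof. by []. Qed.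

Lemma cnt_cons y s j g :
  cnt (y :: s) j g = (\sum_(i < j.+1) 'C(j, i) * cnt s (j - i) (g - y *+ i))%N.
Proof.
elim: j g => [|j IH] g.
  by rewrite big_ord1 /= subr0 bin0 mul1n.
rewrite /= big_cons IH.
under eq_bigr => z _ do rewrite IH.
rewrite exchange_big /=.
under [X in (_ + X)%N]eq_bigr => i _ do rewrite -big_distrr /=.
rewrite [RHS]big_ord_recl bin0 mul1n subn0 mulr0n subr0.
under [X in (_ = (_ + X)%N)]eq_bigr => i _ do rewrite lift0 binS mulnDl subSS.
rewrite big_split /= [RHS]addnA [RHS]addnC; congr (_ + _)%N.
  by apply: eq_bigr => i _; rewrite mulrS opprD addrA.
rewrite [LHS]big_ord_recl bin0 mul1n subn0.
rewrite [X in (_ = (_ + X))%N]big_ord_recr /= bin_small // mul0n addn0.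
congr (_ + _)%N.
  by apply: eq_bigr => z _; rewrite mulr0n subr0.
apply: eq_bigr => i _; have -> : bump 0 i = i.+1 by [].
rewrite -[(j - i)%N](subnSK (ltn_ord i)) /=.
congr (_ * _)%N; apply: eq_bigr => z _; congr cnt.
by rewrite -!addrA (addrC (- z)).
Qed.

Lemma cnt_frob p s g : prime p ->
  (cnt s p g = count (fun t => g == t *+ p) s %[mod p])%N.
Proof.
move=> pp; have p_gt0 := prime_gt0 pp.
elim: s => [|y s IH].
  by case: p pp p_gt0 => //= p' _ _; rewrite big_nil.
rewrite cnt_cons /=.
case: p pp p_gt0 IH => // p' pp _ IH.
rewrite big_ord_recl big_ord_recr /= !bump0' bin0 mul1n mulr0n subr0 binn mul1n subnn /= subr_eq0.
set S := (\sum_(i < p') _)%N.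
have dv : (p'.+1 %| S)%N.
  apply: dvdn_sum => i _; apply: dvdn_mulr; apply: prime_dvd_bin => //.
  by rewrite ltnS ltn_ord.
rewrite -[cnt s p'.+1 g]/(\sum_(y0 <- s) cnt s p' (g - y0))%N in IH.
rewrite addnCA -modnDml (eqP dv) add0n addnC. by rewrite -modnDmr IH modnDmr.
Qed.

Lemma mulrn_pair (t : G) n : t *+ n = (t.1 *+ n, t.2 *+ n).
Proof. elim: n => [|n IH]. rewrite !mulr0n. reflexivity.
rewrite !mulrS IH. reflexivity. Qed.
Lemma mulrn_inj p (t t' : G) : (0 < p)%N -> t *+ p = t' *+ p -> t = t'.
Proof.
move=> p0; rewrite !mulrn_pair => e.
have e1 : t.1 *+ p = t'.1 *+ p by rewrite -[LHS]/((t.1 *+ p, t.2 *+ p).1) e.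
have e2 : t.2 *+ p = t'.2 *+ p by rewrite -[LHS]/((t.1 *+ p, t.2 *+ p).2) e.
move/eqP: e1; rewrite (eqr_pMn2r p0) => /eqP e1.
move/eqP: e2; rewrite (eqr_pMn2r p0) => /eqP e2.
by clear e; case: t t' e1 e2 => a b [c d] /= -> ->.
Qed.

Section SR.
Variables (F : fieldType) (P : pred G -> Prop).

Fixpoint allb (l : seq (F * pred G)) : Prop :=
  if l is z :: l' then P z.2 /\ allb l' else True.

Definition rep (f : G -> F) :=
  exists l : seq (F * pred G), allb l /\
    forall g, f g = \sum_(z <- l) z.1 * ((z.2 g : bool) : nat)%:R.

Lemma rep_ext f f' : (forall g, f g = f' g) -> rep f -> rep f'.
Proof. by move=> e [l [Hl Hf]]; exists l; split=> // g; rewrite -e. Qed.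

Lemma rep_const f D x y : is_partition P -> rep f -> P D -> D x -> D y -> f x = f y.
Proof.
case=> _ _ Hp [l [Hl Hf]] PD Dx Dy; rewrite !Hf; clear Hf.
elim: l Hl => [|z l IH] Hl; first by rewrite !big_nil.
case: Hl => Pz Hl.
rewrite !big_cons IH //.
congr (_ * _ + _).
case zx: (z.2 x); case zy: (z.2 y) => //.
  by have := Hp _ _ _ Pz PD zx Dx y; rewrite zy Dy.
by have := Hp _ _ _ Pz PD zy Dy x; rewrite zx Dx.
Qed.

Lemma prod_coefE (s1 s2 : seq G) g (D1 : pred G) : uniq s1 -> D1 =i s1 ->
  prod_coef F s1 s2 g = \sum_(y <- s2) ((D1 (g - y) : bool) : nat)%:R.
Proof.
move=> u1 e1; rewrite /prod_coef exchange_big /=; apply: eq_bigr => y _.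
rewrite -natr_sum; congr (_%:R).
have -> : D1 (g - y) = (g - y \in s1) by apply: e1.
rewrite -count_uniq_mem // -sum1_count big_mkcond /=.
rewrite [RHS]big_mkcond; apply: eq_bigr => x _.
by rewrite (eq_sym x) subr_eq eq_sym; case: (_ == _).
Qed.
Lemma allb_cat l1 l2 : allb l1 -> allb l2 -> allb (l1 ++ l2).
Proof. by elim: l1 => //= z l1 IH [? ?] ?; split=> //; apply: IH. Qed.

Lemma allb_map n (c : 'I_n -> F) (E : 'I_n -> pred G) :
  (forall i, P (E i)) -> allb [seq (c i, E i) | i <- enum 'I_n].
Proof. by move=> HE; elim: (enum 'I_n) => //= i r IH; split. Qed.

Lemma rep_conv f T s : schur_ring F P -> rep f -> P T -> uniq s -> T =i s ->
  rep (fun g => \sum_(y <- s) f (g - y)).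
Proof.
move=> [Hpart Hfin _ _ Hmul] [l [Hl Hf]] PT us es.
apply: (@rep_ext (fun g => \sum_(y <- s) \sum_(z <- l) z.1 * ((z.2 (g - y) : bool) : nat)%:R)).
  by move=> g; apply: eq_bigr => y _; rewrite Hf.
clear Hf; elim: l Hl => [|z l IH] [].
  by exists [::]; split=> // g; rewrite big_nil big1 // => y _; rewrite big_nil.
move=> Pz Hl; have [l' [Hl' Hf']] := IH Hl.
have [sz [usz esz]] := Hfin _ Pz.
have [n [c [E [PE HE]]]] := Hmul _ _ _ _ Pz PT usz us esz es.
exists ([seq (z.1 * c i, E i) | i <- enum 'I_n] ++ l'); split.
  by apply: allb_cat => //; apply: allb_map.
move=> g; rewrite big_cat /= -Hf' big_map big_enum /=.
under eq_bigr => y _ do rewrite big_cons.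
rewrite big_split /=; congr (_ + _).
rewrite -mulr_sumr -(@prod_coefE sz s g _ usz esz) HE mulr_sumr.
by apply: eq_bigr => i _; rewrite mulrA.
Qed.
End SR.
Arguments rep_const {F P f D x y}.
Arguments rep_conv {F P f T s}.
Arguments rep_ext {F P f f'}.

Lemma natF_inj {F : fieldType} : [pchar F] =i pred0 ->
  forall m n, (m%:R : F) = n%:R -> m = n.
Proof.
move=> /pcharf0P ch.
have key : forall m n, (m <= n)%N -> (m%:R : F) = n%:R -> m = n.
  move=> m n le; have [d ->] : exists d, n = (m + d)%N by exists (n - m)%N; rewrite subnKC.
  rewrite natrD -{1}(addr0 (m%:R)) => /addrI /esym/eqP.
  by rewrite ch => /eqP ->; rewrite addn0.
move=> m n e; case: (leqP m n) => [le|/ltnW le]; first exact: key.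
by apply/esym/key.
Qed.

Lemma sum_count (s : seq G) (a : pred G) : (\sum_(y <- s) (a y : nat))%N = count a s.
Proof. by elim: s => [|y s IH]; rewrite ?big_nil ?big_cons ?IH. Qed.

Section SR2.
Variables (F : fieldType) (P : pred G -> Prop).
Hypothesis ch : [pchar F] =i pred0.
Hypothesis sr : schur_ring F P.

Lemma rep_pt : rep F P (fun g => ((g == 0 : bool) : nat)%:R : F).
Proof.
case: sr => _ _ [D [PD HD]] _ _.
exists [:: (1, D)]; split=> // g; rewrite big_cons big_nil /= mul1r addr0 HD.
by [].
Qed.

Lemma rep_ind D : P D -> rep F P (fun g => ((D g : bool) : nat)%:R : F).
Proof.
move=> PD; exists [:: (1, D)]; split=> // g; rewrite big_cons big_nil /= mul1r addr0.
by [].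
Qed.

Lemma rep_cnt T s j : P T -> uniq s -> T =i s ->
  rep F P (fun g => (cnt s j g)%:R : F).
Proof.
move=> PT us es; elim: j => [|j IH] /=; first exact: rep_pt.
apply: rep_ext (rep_conv sr IH PT us es) => g.
by rewrite natr_sum.
Qed.

Lemma frob_basic T s p t0 E e : P T -> uniq s -> T =i s -> prime p ->
  T t0 -> P E -> E (t0 *+ p) -> E e -> exists t, T t /\ e = t *+ p.
Proof.
move=> PT us es pp Tt0 PE Ep Ee.
have p0 := prime_gt0 pp.
have part : is_partition P by case: sr.
have := rep_const part (rep_cnt _ _ p PT us es) PE Ee Ep => /(natF_inj (F:=F) ch) ec.
have h1 := cnt_frob _ s e pp; have h2 := cnt_frob _ s (t0 *+ p) pp.
have c1 : count (fun t => t0 *+ p == t *+ p) s = 1%N.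
  rewrite (eq_count (a2 := pred1 t0)); last first.
    move=> t /=; apply/eqP/eqP => [/(mulrn_inj _ _ _ p0) ->|->] //.
  have ts : t0 \in s by rewrite -(es t0).
  by rewrite (count_uniq_mem _ us) ts.
rewrite c1 -ec h1 in h2.
have : has (fun t => e == t *+ p) s.
  rewrite has_count lt0n; apply/negP => /eqP c0.
  by move: h2; rewrite c0 mod0n (modn_small (prime_gt1 pp)).
by case/hasP => t ts /eqP ->; exists t; split => //; move: (es t); rewrite ts.
Qed.

Lemma coset_lemma (H : G -> Prop) T1 T2 t1 t2 t1' : A_subgroup P H ->
  P T1 -> P T2 -> T1 t1 -> T2 t2 -> H (t1 - t2) -> T1 t1' ->
  exists t2', T2 t2' /\ H (t1' - t2').
Proof.
move=> [_ HA] PT1 PT2 T1t1 T2t2 Hh T1t1'.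
have [D [PD [Dh DH]]] := HA _ Hh.
have [s2 [us2 es2]] : gfinite T2 by case: sr => _ Hf _ _ _; apply: Hf.
have part : is_partition P by case: sr.
have rc := rep_conv sr (rep_ind _ PD) PT2 us2 es2.
have := rep_const part rc PT1 T1t1 T1t1'.
rewrite /= -!natr_sum => /(natF_inj (F:=F) ch).
rewrite (sum_count _ (fun y => D (t1 - y))) (sum_count _ (fun y => D (t1' - y))) => ec.
have : has (fun y => D (t1' - y)) s2.
  rewrite has_count -ec -has_count; apply/hasP; exists t2; first by rewrite -es2.
  exact Dh.
case/hasP => y ys Dy; exists y; split; last exact: DH.
by move: (es2 y); rewrite ys.
Qed.

Lemma iter_frob T x0 p : prime p -> P T -> T x0 -> forall i D e, P D ->
  D (x0 *+ p ^ i) -> D e -> exists t, T t /\ e = t *+ p ^ i.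
Proof.
move=> pp PT Tx0 i; have part : is_partition P by case: sr.
case: (part) => _ Hcov Hp.
elim: i => [|i IH] D e PD Dx De.
  exists e; split; last by rewrite expn0 mulr1n.
  rewrite expn0 mulr1n in Dx; by rewrite -(Hp _ _ _ PD PT Dx Tx0 e).
have [D' [PD' D'x]] := Hcov (x0 *+ p ^ i).
have [s' [us' es']] : gfinite D' by case: sr => _ Hf _ _ _; apply: Hf.
rewrite expnSr mulrnA in Dx.
have [d [D'd ->]] := frob_basic _ _ _ _ _ _ PD' us' es' pp D'x PD Dx De.
have [t [Tt ->]] := IH D' d PD' D'x D'd.
by exists t; split => //; rewrite expnSr mulrnA.
Qed.

End SR2.

Lemma mulrz_pair (t : G) (z : int) : t *~ z = (t.1 *~ z, t.2 *~ z).
Proof.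
case: z => n; rewrite /intmul; first exact: mulrn_pair.
by rewrite mulrn_pair.
Qed.

Lemma cyc_a2 z x : cyc (gen_a *~ z) x -> x.2 = 0.
Proof. by case=> j ->; rewrite !mulrz_pair /= !mul0rz. Qed.

Lemma cyc_a_of (x : G) : x.2 = 0 -> cyc gen_a x.
Proof.
move=> x2; exists x.1; rewrite mulrz_pair /=.
case: x x2 => a b /= ->; by rewrite mul0rz intz.
Qed.

Lemma pair_eq (x y : G) : x.1 = y.1 -> x.2 = y.2 -> x = y.
Proof. by case: x y => a b [c d] /= -> ->. Qed.

Lemma fst_sub (x y : G) : (x - y).1 = x.1 - y.1.
Proof. by case: x; case: y. Qed.
Lemma snd_sub (x y : G) : (x - y).2 = x.2 - y.2.
Proof. by case: x; case: y. Qed.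
Lemma fst_pair (a b : int) : ((a, b) : G).1 = a. Proof. by []. Qed.
Lemma snd_pair (a b : int) : ((a, b) : G).2 = b. Proof. by []. Qed.

Lemma subpair (a b c d : int) : ((a, b) : G) - (c, d) = (a - c, b - d).
Proof. by []. Qed.

Lemma ga1 : gen_a.1 = 1. Proof. by []. Qed.
Lemma ga2 : gen_a.2 = 0. Proof. by []. Qed.

Lemma arith (n k q : int) (m : nat) : (m%:R : int) = q * (Num.sg k * k) + 1 ->
  (1 : int) *~ n - (1 : int) *~ n *+ m = (1 : int) *~ k *~ - (n * q * Num.sg k).
Proof. by move=> mR; rewrite !mulrzz -mulr_natr mR; ring. Qed.

Theorem mainTheorem2 (F : fieldType) (P : pred G -> Prop) (k : int) :
  [pchar F] =i pred0 ->
  schur_ring F P ->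
  k != 0 ->
  A_subgroup P (cyc (gen_a *~ k)) ->
  A_subgroup P (cyc gen_a).
Proof.
move=> ch sr k0 HAk.
have part : is_partition P by case: sr.
case: (part) => _ Hcov Hp.
have key : forall T x0, P T -> T x0 -> cyc gen_a x0 -> forall t, T t -> t.2 = 0.
  move=> T x0 PT Tx0 [n xn] t0 Tt0.
  pose K := `|k|%N.
  have K0 : (0 < K)%N by rewrite absz_gt0.
  have [p Kp pp] := prime_above K.
  have cop : coprime p K.
    by rewrite prime_coprime //; apply/negP => /(dvdn_leq K0); rewrite leqNgt Kp.
  pose r := totient K; pose m := (p ^ r)%N.
  have em : (m = 1 %[mod K])%N := Euler_exp_totient cop.
  have r0 : (0 < r)%N by rewrite totient_gt0.
  have m1 : (1 < m)%N.
    rewrite /m -(prednK r0) expnS; apply: (leq_trans (prime_gt1 pp)).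
    by apply: leq_pmulr; rewrite expn_gt0 prime_gt0.
  have [q mq] : exists q, (m - 1 = q * K)%N.
    by move/eqP: em; rewrite eqn_mod_dvd ?(ltnW m1) // => /dvdnP.
  have [E [PE Em]] := Hcov (x0 *+ m).
  have hd : cyc (gen_a *~ k) (x0 - x0 *+ m).
    exists (- (n * q%:R * Num.sg k)).
    have mR : (m%:R : int) = q%:R * (Num.sg k * k) + 1.
      have -> : m = (q * K + 1)%N by rewrite -mq subnK // ltnW.
      by rewrite natrD natrM natr_absz intz normrEsg.
    rewrite xn !mulrz_pair mulrn_pair subpair !fst_pair !snd_pair.
    congr (_, _); last by rewrite !mul0rz mul0rn subrr.
    exact: arith mR.
  have cl := @coset_lemma F P ch sr _ _ _ _ _ _ HAk PT PE Tx0 Em hd.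
  have it := @iter_frob F P ch sr T x0 p pp PT Tx0 r E.
  have step : forall t, T t -> exists t', T t' /\ t.2 = t'.2 *+ m.
    move=> t Tt; have [e [Ee He]] := cl t Tt.
    have [t' [Tt' et]] := it e PE Em Ee.
    exists t'; split => //.
    have := cyc_a2 _ _ He; rewrite snd_sub et mulrn_pair snd_pair => /eqP.
    by rewrite subr_eq0 => /eqP.
  suff: forall N t, T t -> (`|t.2| < N)%N -> t.2 = 0.
    by move=> h; apply: (h _ t0 Tt0 (ltnSn _)).
  elim=> // N IH t Tt ltN.
  have [t' [Tt' e]] := step t Tt.
  case: (eqVneq t'.2 0) => [z|nz]; first by rewrite e z mul0rn.
  have : (`|t'.2| < N)%N.
    have ee : (`|t.2| = `|t'.2| * m)%N by rewrite e -mulr_natr abszM natz absz_nat.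
    rewrite ltnS in ltN; apply: leq_trans ltN; rewrite ee ltn_Pmulr // absz_gt0; exact: nz.
  by move/(IH t' Tt') => z; move: nz; rewrite z eqxx.
split.
  split; first by exists 0; rewrite mulr0z.
  by move=> x y [a ->] [b ->]; exists (a - b); rewrite mulrzBr.
move=> x hx; have [D [PD Dx]] := Hcov x.
exists D; split => //; split => // y Dy.
by apply: cyc_a_of; exact: key D x PD Dx hx y Dy.
Qed.
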